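(* Let $D$ be a collection of $10$ points of $\mathbb{CP}^1$ counted with multiplicities (i.e. an effective divisor of degree $10$ on $\mathbb{CP}^1$) whose support consists of at least $3$ distinct points, and let $T$ be the group of Möbius transformations of $\mathbb{CP}^1$ that map $D$ to itself (preserving multiplicities). Then $|T| \leq 24$. *)

(* Defs.v *)
(* The complex numbers are modelled as R[i] = complex R for
   an arbitrary R : realType (a complete archimedean ordered field, i.e. the
   real numbers); the projective line CP^1 as option R[i] with None = oo. *)
From HB Require Import structures.
From mathcomp Require Import all_boot all_order all_algebra.
From mathcomp Require Import reals.
From mathcomp.real_closed Require Import complex.
Set Implicit Arguments. Unset Strict Implicit. Unset Printing Implicit Defensive.
Import Order.TTheory GRing.Theory Num.Theory.
Local Open Scope ring_scope.

Definition P1 (C : Type) := option C.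

Definition mobius_fun (C : fieldType) (a b c d : C) (z : P1 C) : P1 C :=
  match z with
  | None => if c == 0 then None else Some (a / c)
  | Some x => if c * x + d == 0 then None
              else Some ((a * x + b) / (c * x + d))
  end.

Definition is_mobius (C : fieldType) (f : P1 C -> P1 C) : Prop :=
  exists a b c d : C, a * d - b * c != 0 /\ forall z, f z = mobius_fun a b c d z.

(* An effective divisor on P^1 is represented by the multiset (seq) of its
   points counted with multiplicity; its degree is the size of the seq,
   the multiplicity of x is count_mem x D, its support is undup D. *)
Definition preserves_divisor (C : fieldType) (D : seq (P1 C))
    (f : P1 C -> P1 C) : Prop :=
  forall x : P1 C, count_mem (f x) D = count_mem x D.

(* Main.v *)
Require Import Defs.
From HB Require Import structures.
From mathcomp Require Import all_boot all_order all_algebra.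
From mathcomp Require Import reals.
From mathcomp.real_closed Require Import complex.
From mathcomp Require Import all_fingroup.
From mathcomp Require Import ring lra zify.
From Stdlib Require Import ClassicalEpsilon.
Import Order.TTheory GRing.Theory Num.Theory.
Set Implicit Arguments. Unset Strict Implicit. Unset Printing Implicit Defensive.

Lemma arith2 {N k k2 k3 n1 n3} : 25 <= N -> 3 <= k <= 10 -> k2 + k3 + k = N + 2 ->
  k * n1 = N -> k2 * 2 = N -> k3 * n3 = N -> 2 <= n3 -> False.
Proof.
move=> hN hk e e1 e2 e3 h3.
have n3l : n3 <= 5.
  case: (leqP n3 5) => // h; have : k3 * 6 <= N by rewrite -e3 leq_mul2l h orbT.
  lia.
have n1l : n1 <= 5.
  case: (leqP n1 5) => // h; have : k * 6 <= N by rewrite -e1 leq_mul2l h orbT.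
  case: n3 n3l h3 e3 => [|[|[|[|[|[|]]]]]] //= _ _ e3; lia.
case: n3 n3l h3 e3 => [|[|[|[|[|[|]]]]]] //= _ _ e3; case: n1 n1l e1 => [|[|[|[|[|[|]]]]]] //= _ e1; lia.
Qed.

Lemma arith N k k2 k3 n1 n2 n3 : 25 <= N -> 3 <= k <= 10 -> k2 + k3 + k = N + 2 ->
  k * n1 = N -> k2 * n2 = N -> k3 * n3 = N -> 2 <= n2 -> 2 <= n3 -> False.
Proof.
move=> hN hk e e1 e2 e3 h2 h3.
case: (leqP n2 2) => h2'.
  have n2e : n2 = 2 by lia.
  subst n2; exact: (arith2 hN hk e e1 e2 e3 h3).
case: (leqP n3 2) => h3'.
  have n3e : n3 = 2 by lia.
  subst n3; apply: (arith2 (k2 := k3) (k3 := k2) hN hk _ e1 e3 e2 h2); lia.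
have : k2 * 3 <= N by rewrite -e2 leq_mul2l h2' orbT.
have : k3 * 3 <= N by rewrite -e3 leq_mul2l h3' orbT.
lia.
Qed.

Ltac clear_lets := repeat match goal with x := _ |- _ => clearbody x end.
Ltac glia G := let n := fresh "n" in set n := #|G| in *; clear_lets; lia.
Ltac gnia G := let n := fresh "n" in set n := #|G| in *; clear_lets; nia.

Lemma two_le k n N : k * n = N -> 0 < N - k -> 2 <= n.
Proof. by case: n => [|[|n]] //; rewrite ?muln0 ?muln1 => <-; rewrite ?sub0n ?subnn. Qed.

Section Abstract.
Variables (aT : finGroupType) (G : {group aT}) (X : finType) (to : action G X).
Hypothesis hfix : forall a, a \in G -> a != 1%g -> #|('Fix_to[a])%g| = 2.

Let P := orbit to G @: [set: X].

Lemma actsT : [acts G, on [set: X] | to].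
Proof. by apply/subsetP => a Ga; rewrite !inE Ga /=; apply/subsetP => x _; rewrite !inE. Qed.

Lemma orbit_stab x : #|orbit to G x| * #|('C_G[x | to])%g| = #|G|.
Proof. by rewrite card_orbit_in_stab. Qed.

Lemma stab_pos x : 0 < #|('C_G[x | to])%g|.
Proof. by apply/card_gt0P; exists 1%g; exact: group1. Qed.

Lemma orbit_pos x : 0 < #|orbit to G x|.
Proof. by apply/card_gt0P; exists x; exact: orbit_refl. Qed.

Lemma orbit_le x : #|orbit to G x| <= #|G|.
Proof. by rewrite -(orbit_stab x) leq_pmulr // stab_pos. Qed.

Lemma orbit_special x : #|orbit to G x| < #|G| -> 2 * #|orbit to G x| <= #|G|.
Proof.
have := orbit_stab x; have := stab_pos x.
move: #|('C_G[x | to])%g| #|orbit to G x| => s k hs e hk.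
case: s hs e => [|[|s]] // _ e; first by lia.
nia.
Qed.

Lemma sumF : \sum_(O in P) (#|G| - #|O|) = 2 * #|G| - 2.
Proof.
have FC := Frobenius_Cauchy actsT.
have e2 : \sum_(a in G) #|('Fix_([set: X] | to)[a])%g| = #|X| + 2 * (#|G| - 1).
  rewrite (big_setD1 1%g) ?group1 //= setTI.
  have -> : ('Fix_to[1%g])%g = [set: X].
    by apply/setP => x; rewrite [RHS]inE; apply/afix1P; exact: act1.
  rewrite cardsT (eq_bigr (fun _ => 2)); last first.
    by move=> a; rewrite !inE => /andP [na Ga]; rewrite setTI hfix.
  by rewrite sum_nat_const (cardsD1 1%g G) group1 /= add1n subn1 /= mulnC.
have e3 : \sum_(O in P) #|O| = #|X| by rewrite acts_sum_card_orbit ?actsT // cardsT.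
have e4 : \sum_(O in P) (#|G| - #|O|) + \sum_(O in P) #|O| = #|P| * #|G|.
  rewrite -big_split /= -sum_nat_const; apply: eq_bigr => O /imsetP [x _ ->].
  by rewrite subnK // orbit_le.
have e5 : #|P| * #|G| = #|X| + 2 * (#|G| - 1) by rewrite -e2 FC.
have G1 : 0 < #|G| by apply/card_gt0P; exists 1%g; exact: group1.
lia.
Qed.

Lemma big_le (Q : pred {set X}) (F : {set X} -> nat) O : Q O -> F O <= \sum_(O' | Q O') F O'.
Proof. by move=> hQ; rewrite (bigD1 O) //= leq_addr. Qed.

End Abstract.

Lemma abstract (aT : finGroupType) (G : {group aT}) (X : finType) (to : action G X)
  (hfix : forall a, a \in G -> a != 1%g -> #|('Fix_to[a])%g| = 2) (S : {set X}) : (forall x a, x \in S -> a \in G -> to x a \in S) ->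
  3 <= #|S| <= 10 -> #|G| <= 24.
Proof.
move=> hS /andP [h3 h10]; rewrite leqNgt; apply/negP => hN.
set P := orbit to G @: [set: X].
have orbit_sub : forall x, x \in S -> orbit to G x \subset S.
  by move=> x Sx; apply/subsetP => y /imsetP [a Ga ->]; exact: hS.
have orbitP : forall x, orbit to G x \in P by move=> x; apply: imset_f; rewrite inE.
have orbit_eq : forall x y, y \in orbit to G x -> orbit to G y = orbit to G x.
  by move=> x y h; apply/orbit_in_eqP.
have Fpos : forall O, O \in P -> 0 < #|G| - #|O| -> #|G| <= 2 * (#|G| - #|O|).
  move=> O /imsetP [x xT ->] h; have hlt : #|orbit to G x| < #|G| by lia.
  have := orbit_special hlt; lia.
have Fle : forall O, O \in P -> #|G| - #|O| < #|G|.
  move=> O /imsetP [x xT ->]; have := orbit_pos to x; lia.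
have SF := sumF hfix.
have [x1 Sx1] : exists x1, x1 \in S by apply/card_gt0P; lia.
set O1 := orbit to G x1.
have O1S := orbit_sub _ Sx1.
have k1 : #|O1| <= 10 by apply: leq_trans h10; exact: subset_leq_card.
have SO1 : S \subset O1.
  apply/subsetP => x2 Sx2; apply/negPn/negP => nx2.
  set O2 := orbit to G x2.
  have O2S := orbit_sub _ Sx2.
  have O12 : O2 != O1 by apply: contraNneq nx2 => <-; exact: orbit_refl.
  have disj : O1 :&: O2 = set0.
    apply/setP => y; rewrite !inE; apply/negP => /andP [y1 y2].
    by move/eqP: O12; apply; rewrite /O1 /O2 -(orbit_eq _ _ y1) -(orbit_eq _ _ y2).
  have c12 : #|O1| + #|O2| <= #|S|.
    have := cardsU O1 O2; rewrite disj cards0 subn0 => <-.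
    by apply: subset_leq_card; rewrite subUset O1S O2S.
  move: SF; rewrite (bigD1 O1) ?orbitP //= (bigD1 O2) /=; last by rewrite orbitP O12.
  set R := \sum_(O | _) _ => SF0.
  have SF : #|G| - #|O1| + (#|G| - #|O2| + R) = 2 * #|G| - 2 := SF0.
  clear SF0.
  have R0 : forall O, (O \in P) && (O != O1) && (O != O2) -> #|G| - #|O| = 0.
    move=> O hO; have hR : #|G| - #|O| <= R by apply: (big_le (fun O => #|G| - #|O|)).
    move: hO => /andP [/andP [OP hx1] hx2].
    case: (posnP (#|G| - #|O|)) => [-> // | /(Fpos _ OP) hp].
    lia.
  have R00 : R = 0 by apply: big1 => O hO; exact: R0.
  have : ~~ (S \subset O1 :|: O2).
    apply/negP => /subset_leq_card; have := cardsU O1 O2; rewrite disj cards0 subn0 => ->; lia.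
  case/subsetPn => x3 Sx3; rewrite !inE negb_or => /andP [n1 n2].
  have : #|G| - #|orbit to G x3| = 0.
    apply: R0; rewrite orbitP /=; apply/andP; split.
      by apply: contraNneq n1 => <-; exact: orbit_refl.
    by apply: contraNneq n2 => <-; exact: orbit_refl.
  have : #|orbit to G x3| <= #|S| by apply: subset_leq_card; exact: orbit_sub.
  lia.
have kS : #|O1| = #|S| by apply/eqP; rewrite eqn_leq !subset_leq_card.
move: SF; rewrite (bigD1 O1) ?orbitP //= => SF.
set P' := [set O in P | (O != O1) && (0 < #|G| - #|O|)].
have R1 : \sum_(O | (O \in P) && (O != O1)) (#|G| - #|O|) = \sum_(O in P') (#|G| - #|O|).
  rewrite (@bigID _ _ _ _ _ (fun O : {set X} => 0 < #|G| - #|O|)) /= [X in _ + X]big1; last first.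
    by move=> O /andP [hx]; rewrite lt0n negbK => /eqP.
  by rewrite addn0; apply: eq_bigl => O; rewrite !inE andbA.
rewrite R1 in SF.
have SF' : #|G| - #|O1| + \sum_(O in P') (#|G| - #|O|) = 2 * #|G| - 2 := SF.
clear SF.
have b1 : #|P'| * #|G| <= 2 * \sum_(O in P') (#|G| - #|O|).
  rewrite -sum_nat_const big_distrr /=; apply: leq_sum => O; rewrite !inE => /andP [OP /andP [hx h]].
  exact: Fpos.
have b2 : \sum_(O in P') (#|G| - #|O|) <= #|P'| * (#|G| - 1).
  rewrite -sum_nat_const; apply: leq_sum => O; rewrite !inE => /andP [OP hx].
  have := Fle _ OP; lia.
have cP : #|P'| = 2.
  have u : #|P'| <= 2.
    case: (leqP #|P'| 2) => // h.
    have : 3 * #|G| <= #|P'| * #|G| by rewrite leq_mul2r h orbT.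
    lia.
  have l : 2 <= #|P'|.
    case: (leqP 2 #|P'|) => // h.
    have : #|P'| * (#|G| - 1) <= 1 * (#|G| - 1) by rewrite leq_mul2r; apply/orP; right; lia.
    lia.
  lia.
move/eqP: cP => /cards2P [O2 [O3 [O23 eP]]].
have O2P : O2 \in P' by rewrite eP !inE eqxx.
have O3P : O3 \in P' by rewrite eP !inE eqxx orbT.
move: SF'; rewrite eP big_setU1 ?inE //= big_set1 => SF0.
have SF : #|G| - #|O1| + ((#|G| - #|O2|) + (#|G| - #|O3|)) = 2 * #|G| - 2 := SF0.
clear SF0.
move: O2P O3P; rewrite !inE => /andP [/imsetP [y2 y2T e2] /andP [h2x h2]] /andP [/imsetP [y3 y3T e3] /andP [h3x h3']].
have s1 := orbit_stab to x1; have s2 := orbit_stab to y2; have s3 := orbit_stab to y3.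
rewrite -e2 in s2; rewrite -e3 in s3.
have hN' : 25 <= #|G| := hN.
have hk : 3 <= #|O1| <= 10 by rewrite kS h3 h10.
have O2le : #|O2| <= #|G| by rewrite e2 orbit_le.
have O3le : #|O3| <= #|G| by rewrite e3 orbit_le.
have O1le : #|O1| <= #|G| by rewrite orbit_le.
have e : #|O2| + #|O3| + #|O1| = #|G| + 2 by lia.
exact: (arith hN' hk e s1 s2 s3 (two_le s2 h2) (two_le s3 h3')).
Qed.


Local Open Scope ring_scope.

Section Geo.
Variable C : numClosedFieldType.

Definition proj (w : C * C) : P1 C := if w.2 == 0 then None else Some (w.1 / w.2).
Definition lift (z : P1 C) : C * C := match z with None => (1, 0) | Some x => (x, 1) end.
Definition nz (w : C * C) := (w.1 != 0) || (w.2 != 0).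

Lemma proj_lift z : proj (lift z) = z.
Proof. by case: z => [x|]; rewrite /proj /= ?oner_eq0 ?divr1 ?eqxx. Qed.

Lemma nz_lift z : nz (lift z).
Proof. by case: z => [x|]; rewrite /nz /= oner_eq0 ?orbT. Qed.

Record mx := Mx { ma : C; mb : C; mc : C; md : C }.
Definition app (M : mx) (w : C * C) := (ma M * w.1 + mb M * w.2, mc M * w.1 + md M * w.2).
Definition det (M : mx) := ma M * md M - mb M * mc M.
Definition mob (M : mx) := mobius_fun (ma M) (mb M) (mc M) (md M).
Definition mmul (M N : mx) := Mx (ma M * ma N + mb M * mc N) (ma M * mb N + mb M * md N)
   (mc M * ma N + md M * mc N) (mc M * mb N + md M * md N).
Definition adj (M : mx) := Mx (md M) (- mb M) (- mc M) (ma M).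
Definition mid := Mx 1 0 0 1.

Lemma mob_proj M w : nz w -> mob M (proj w) = proj (app M w).
Proof.
case: M => a b c d; case: w => u v; rewrite /nz /mob /proj /app /=.
have [->|v0] := eqVneq v 0; rewrite ?eqxx /= ?orbF => hu.
  rewrite !mulr0 !addr0 mulf_eq0 (negbTE hu) orbF.
  case: eqP => // /eqP hc; congr Some; field; by rewrite hu hc.
rewrite ?(negbTE v0) /=.
have e : c * (u / v) + d = (c * u + d * v) / v by field.
rewrite e mulf_eq0 invr_eq0 (negbTE v0) orbF.
case: eqP => // /eqP h; congr Some; field; by rewrite h v0.
Qed.

Lemma nz_app M w : det M != 0 -> nz w -> nz (app M w).
Proof.
case: M => a b c d; case: w => u v; rewrite /nz /det /app /= => hd hw.
apply: contraT; rewrite negb_or !negbK => /andP [/eqP h1 /eqP h2]; move/orP: hw => [] hw.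
  have : (a * d - b * c) * u = 0.
    have -> : (a * d - b * c) * u = d * (a * u + b * v) - b * (c * u + d * v) by ring.
    by rewrite h1 h2; ring.
  by move/eqP; rewrite mulf_eq0 (negbTE hd) (negbTE hw).
have : (a * d - b * c) * v = 0.
  have -> : (a * d - b * c) * v = a * (c * u + d * v) - c * (a * u + b * v) by ring.
  by rewrite h1 h2; ring.
by move/eqP; rewrite mulf_eq0 (negbTE hd) (negbTE hw).
Qed.

Lemma proj_eq w w' : nz w -> nz w' -> (proj w == proj w') = (w.1 * w'.2 == w.2 * w'.1).
Proof.
case: w => u v; case: w' => u' v'; rewrite /nz /proj /=.
have [->|v0] := eqVneq v 0; have [->|v0'] := eqVneq v' 0; rewrite ?eqxx ?(negbTE v0) ?(negbTE v0') /= ?mulr0 ?mul0r ?eqxx ?orbF // => h h'.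
- by rewrite eq_sym mulf_eq0 (negbTE h) (negbTE v0').
- by rewrite [0 == _]eq_sym mulf_eq0 (negbTE h') (negbTE v0).
apply/eqP/eqP => [[e]|e]; last by congr Some; apply/eqP; rewrite eqr_div // e mulrC.
by apply/eqP; move/eqP: e; rewrite eqr_div // [v * u']mulrC.
Qed.

Lemma app_mmul M N w : app (mmul M N) w = app M (app N w).
Proof. case: M N => a b c d [a' b' c' d']; case: w => u v; rewrite /app /=; congr pair; ring. Qed.

Lemma det_mmul M N : det (mmul M N) = det M * det N.
Proof. case: M N => a b c d [a' b' c' d']; rewrite /det /=; ring. Qed.

Lemma mob_comp M N z : det N != 0 -> mob M (mob N z) = mob (mmul M N) z.
Proof.
move=> hN; rewrite -{1 2}(proj_lift z) mob_proj ?nz_lift // mob_proj ?nz_app ?nz_lift //.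
by rewrite mob_proj ?nz_lift // app_mmul.
Qed.

Lemma mob_scal M z : mb M = 0 -> mc M = 0 -> ma M = md M -> ma M != 0 -> mob M z = z.
Proof.
case: M => a b c d /= -> -> -> ha; rewrite /mob /mobius_fun.
case: z => [x|]; rewrite ?eqxx //= mul0r add0r (negbTE ha) ?addr0.
by congr Some; field.
Qed.

Lemma mobK M z : det M != 0 -> mob (adj M) (mob M z) = z.
Proof.
move=> hM; rewrite mob_comp // mob_scal //; case: M hM => a b c d; rewrite /det /= => hM; try ring.
by rewrite (_ : d * a + - b * c = a * d - b * c) //; ring.
Qed.

Lemma det_adj M : det (adj M) = det M.
Proof. case: M => a b c d; rewrite /det /=; ring. Qed.

Lemma mobKV M z : det M != 0 -> mob M (mob (adj M) z) = z.
Proof.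
move=> hM; rewrite mob_comp ?det_adj // mob_scal //; case: M hM => a b c d; rewrite /det /= => hM; try ring.
by rewrite (_ : a * d + b * - c = a * d - b * c) //; ring.
Qed.


Definition Qv (M : mx) (w : C * C) :=
  (ma M * w.1 + mb M * w.2) * w.2 - (mc M * w.1 + md M * w.2) * w.1.
Definition Qf (p q r : C) (w : C * C) := p * w.1 ^+ 2 + q * w.1 * w.2 + r * w.2 ^+ 2.

Lemma QvE M w : Qv M w = Qf (- mc M) (ma M - md M) (mb M) w.
Proof. rewrite /Qv /Qf; ring. Qed.

Lemma fixE M z : det M != 0 -> (mob M z == z) = (Qv M (lift z) == 0).
Proof.
move=> hM; rewrite -[in X in X == _](proj_lift z) mob_proj ?nz_lift //.
rewrite -[in X in _ == X](proj_lift z) proj_eq ?nz_app ?nz_lift //.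
by rewrite /Qv subr_eq0.
Qed.

Lemma lin2 (q r x y : C) : q * x + r = 0 -> q * y + r = 0 -> x != y -> q = 0 /\ r = 0.
Proof.
move=> h1 h2 hxy.
have hq : q * (x - y) = 0.
  have -> : q * (x - y) = (q * x + r) - (q * y + r) by ring.
  by rewrite h1 h2 subrr.
move/eqP: hq; rewrite mulf_eq0 subr_eq0 (negbTE hxy) orbF => /eqP hq.
by split => //; move: h1; rewrite hq mul0r add0r.
Qed.

Lemma quad3 (p q r x y w : C) : p * x ^+ 2 + q * x + r = 0 -> p * y ^+ 2 + q * y + r = 0 ->
  p * w ^+ 2 + q * w + r = 0 -> x != y -> x != w -> y != w -> [/\ p = 0, q = 0 & r = 0].
Proof.
move=> h1 h2 h3 hxy hxw hyw.
have e1 : (p * (x + y) + q) * (x - y) = 0.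
  have -> : (p * (x + y) + q) * (x - y) = (p * x ^+ 2 + q * x + r) - (p * y ^+ 2 + q * y + r) by ring.
  by rewrite h1 h2 subrr.
have e2 : (p * (x + w) + q) * (x - w) = 0.
  have -> : (p * (x + w) + q) * (x - w) = (p * x ^+ 2 + q * x + r) - (p * w ^+ 2 + q * w + r) by ring.
  by rewrite h1 h3 subrr.
move/eqP: e1; rewrite mulf_eq0 subr_eq0 (negbTE hxy) orbF => /eqP e1.
move/eqP: e2; rewrite mulf_eq0 subr_eq0 (negbTE hxw) orbF => /eqP e2.
have e3 : p * (y - w) = 0.
  have -> : p * (y - w) = (p * (x + y) + q) - (p * (x + w) + q) by ring.
  by rewrite e1 e2 subrr.
move/eqP: e3; rewrite mulf_eq0 subr_eq0 (negbTE hyw) orbF => /eqP hp.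
move: h1 h2; rewrite hp !mul0r !add0r => h1 h2.
by have [] := lin2 h1 h2 hxy.
Qed.

Lemma QfN (p q r : C) : Qf p q r (lift None) = p.
Proof. rewrite /Qf /=; ring. Qed.
Lemma QfS (p q r x : C) : Qf p q r (lift (Some x)) = p * x ^+ 2 + q * x + r.
Proof. rewrite /Qf /=; ring. Qed.

Lemma Q3 (p q r : C) z1 z2 z3 : z1 != z2 -> z1 != z3 -> z2 != z3 ->
  Qf p q r (lift z1) = 0 -> Qf p q r (lift z2) = 0 -> Qf p q r (lift z3) = 0 ->
  [/\ p = 0, q = 0 & r = 0].
Proof.
have L : forall x y, x != y -> p = 0 -> Qf p q r (lift (Some x)) = 0 ->
     Qf p q r (lift (Some y)) = 0 -> [/\ p = 0, q = 0 & r = 0].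
  move=> x y hxy hp; rewrite !QfS hp !mul0r !add0r => h1 h2.
  by have [] := lin2 h1 h2 hxy.
case: z1 => [x|]; case: z2 => [y|]; case: z3 => [w|] //=; rewrite ?QfN ?QfS.
- by move=> hxy hxw hyw h1 h2 h3; apply: quad3 h1 h2 h3 hxy hxw hyw.
- move=> hxy _ _ h1 h2 hp; apply: L hp _ _; [exact: hxy | by rewrite QfS | by rewrite QfS].
- move=> _ hxw _ h1 hp h3; apply: L hp _ _; [exact: hxw | by rewrite QfS | by rewrite QfS].
- move=> _ _ hyw hp h2 h3; apply: L hp _ _; [exact: hyw | by rewrite QfS | by rewrite QfS].
Qed.

Lemma fix3 M z1 z2 z3 : det M != 0 -> z1 != z2 -> z1 != z3 -> z2 != z3 ->
  mob M z1 = z1 -> mob M z2 = z2 -> mob M z3 = z3 ->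
  [/\ mc M = 0, ma M = md M & mb M = 0].
Proof.
move=> hM h12 h13 h23 f1 f2 f3.
have g : forall z, mob M z = z -> Qf (- mc M) (ma M - md M) (mb M) (lift z) = 0.
  by move=> z /eqP; rewrite fixE // QvE => /eqP.
have [h1 h2 h3] := Q3 h12 h13 h23 (g _ f1) (g _ f2) (g _ f3).
split => //; first by rewrite -[mc M]opprK h1 oppr0.
by apply/eqP; rewrite -subr_eq0 h2.
Qed.

Lemma roots2 (p q r : C) : q ^+ 2 - 4 * p * r != 0 ->
  exists s : seq (P1 C), [/\ uniq s, size s = 2%N & forall z, (Qf p q r (lift z) == 0) = (z \in s)].
Proof.
move=> hD; set t := sqrtC (q ^+ 2 - 4 * p * r).
have ht : t ^+ 2 = q ^+ 2 - 4 * p * r by rewrite /t sqrtCK.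
have t0 : t != 0 by apply: contraNneq hD => e; rewrite -ht e expr0n.
have [p0|p0] := eqVneq p 0.
  have q0 : q != 0 by apply: contraNneq hD => ->; rewrite p0 expr0n /= !mulr0 mul0r subr0.
  exists [:: None; Some (- r / q)]; split => // z; case: z => [x|]; rewrite ?QfN ?QfS ?p0 ?eqxx //.
  rewrite !inE /= mul0r add0r; apply/eqP/eqP => [h|[->]]; last by field.
  have hx : q * x = - r by apply/eqP; rewrite -addr_eq0; apply/eqP.
  by apply: f_equal; rewrite -hx; field.
set x1 := (- q + t) / (2 * p); set x2 := (- q - t) / (2 * p).
have x12 : x1 != x2.
  apply: contra t0 => /eqP e; have : x1 - x2 = 0 by rewrite e subrr.
  rewrite /x1 /x2 (_ : (- q + t) / (2 * p) - (- q - t) / (2 * p) = t / p); last by field.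
  by move/eqP; rewrite mulf_eq0 invr_eq0 (negbTE p0) orbF.
exists [:: Some x1; Some x2]; split => //=.
  by rewrite inE andbT; apply: contra x12 => /eqP [->].
case => [x|]; last by rewrite QfN !inE (negbTE p0).
rewrite QfS !inE.
have e : p * x ^+ 2 + q * x + r = p * (x - x1) * (x - x2).
  have -> : p * (x - x1) * (x - x2) = p * x ^+ 2 + q * x + r + (q ^+ 2 - 4 * p * r - t ^+ 2) / (4 * p).
    by rewrite /x1 /x2; field.
  by rewrite ht subrr mul0r addr0.
rewrite e !mulf_eq0 (negbTE p0) /= !subr_eq0.
by congr orb; apply/eqP/eqP => [->|[]].
Qed.

Definition mpow (M : mx) k := iter k (mmul M) mid.

Lemma det_mpow M k : det (mpow M k) = det M ^+ k.
Proof.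
elim: k => [|k IH]; first by rewrite /det /=; ring.
by rewrite /mpow iterS -/(mpow M k) det_mmul IH exprS.
Qed.

Lemma mob_mid z : mob mid z = z.
Proof. by apply: mob_scal => //=; rewrite oner_eq0. Qed.

Lemma mob_iter M k z : det M != 0 -> iter k (mob M) z = mob (mpow M k) z.
Proof.
move=> hM; elim: k => [|k IH]; first by rewrite mob_mid.
rewrite iterS IH mob_comp //; last by rewrite det_mpow expf_neq0.
Qed.

Lemma pow_formula (l n b c : C) k : n ^+ 2 + b * c = 0 ->
  mpow (Mx (l + n) b c (l - n)) k.+1 =
  Mx (l ^+ k.+1 + (k.+1)%:R * l ^+ k * n) ((k.+1)%:R * l ^+ k * b)
     ((k.+1)%:R * l ^+ k * c) (l ^+ k.+1 - (k.+1)%:R * l ^+ k * n).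
Proof.
move=> e; elim: k => [|k IH].
  rewrite /mpow /= /mmul /=; congr Mx; ring.
rewrite /mpow iterS -/(mpow _ k.+1) IH /mmul /=.
congr Mx; rewrite !exprS.
- apply/eqP; rewrite -subr_eq0; apply/eqP.
  transitivity ((k.+1)%:R * l ^+ k * (n ^+ 2 + b * c)); first ring.
  by rewrite e mulr0.
- ring.
- ring.
- apply/eqP; rewrite -subr_eq0; apply/eqP.
  transitivity ((k.+1)%:R * l ^+ k * (n ^+ 2 + b * c)); first ring.
  by rewrite e mulr0.
Qed.

Lemma parabolic M k : det M != 0 -> (ma M - md M) ^+ 2 + 4 * mb M * mc M = 0 ->
  ~ [/\ mc M = 0, ma M = md M & mb M = 0] ->
  ~ [/\ mc (mpow M k.+1) = 0, ma (mpow M k.+1) = md (mpow M k.+1) & mb (mpow M k.+1) = 0].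
Proof.
case: M => a b c d; rewrite /det; cbn [ma mb mc md] => hM hD hN.
set l := (a + d) / 2; set n := (a - d) / 2.
have ea : a = l + n by rewrite /l /n; field.
have ed : d = l - n by rewrite /l /n; field.
have e : n ^+ 2 + b * c = 0.
  rewrite /n (_ : ((a - d) / 2) ^+ 2 + b * c = ((a - d) ^+ 2 + 4 * b * c) / 4); last by field.
  by rewrite hD mul0r.
have l0 : l != 0.
  apply: contra hM => /eqP l0; apply/eqP; rewrite ea ed l0.
  rewrite (_ : (0 + n) * (0 - n) - b * c = - (n ^+ 2 + b * c)); last by ring.
  by rewrite e oppr0.
have hmp : Mx a b c d = Mx (l + n) b c (l - n) by rewrite -ea -ed.
rewrite hmp pow_formula //; cbn [ma mb mc md] => -[h1 h2 h3].
have kl : (k.+1)%:R * l ^+ k != 0 by rewrite mulf_neq0 ?pnatr_eq0 ?expf_neq0.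
apply: hN; split.
- by move/eqP: h1; rewrite mulf_eq0 (negbTE kl) => /eqP.
- have : (2 * ((k.+1)%:R * l ^+ k)) * n = 0.
    rewrite (_ : 2 * ((k.+1)%:R * l ^+ k) * n = (l ^+ k.+1 + (k.+1)%:R * l ^+ k * n) - (l ^+ k.+1 - (k.+1)%:R * l ^+ k * n)); last by ring.
    by rewrite h2 subrr.
  have k2 : 2 * ((k.+1)%:R * l ^+ k) != 0 by rewrite mulf_neq0 ?pnatr_eq0.
  move/eqP; rewrite mulf_eq0 (negbTE k2) /= => /eqP n0.
  by rewrite ea ed n0 addr0 subr0.
- by move/eqP: h3; rewrite mulf_eq0 (negbTE kl) => /eqP.
Qed.
End Geo.

Section Main.
Variable C : numClosedFieldType.
Variable D : seq (P1 C).
Hypothesis hsupp : (3 <= size (undup D))%N.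
Hypothesis hdeg : size D = 10%N.

Definition Mob (f : P1 C -> P1 C) := is_mobius f /\ preserves_divisor D f.

Lemma is_mobiusP f : is_mobius f -> exists M : mx C, det M != 0 /\ forall z, f z = @mob C M z.
Proof. by case=> a [b [c [d [h e]]]]; exists (Mx a b c d). Qed.

Lemma mob_is_mobius (M : mx C) : det M != 0 -> is_mobius (mob M).
Proof. by case: M => a b c d h; exists a, b, c, d. Qed.

Lemma mob_inj (M : mx C) : det M != 0 -> injective (mob M).
Proof. by move=> h x y e; rewrite -(mobK x h) e mobK. Qed.

Lemma Mob_inj f : Mob f -> injective f.
Proof. by case=> /is_mobiusP [M [hM e]] _ x y; rewrite !e => /(mob_inj hM). Qed.

Definition S := undup D.

Lemma memS_count x : (x \in S) = (0 < count_mem x D)%N.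
Proof. by rewrite mem_undup -has_pred1 has_count. Qed.

Lemma Mob_S f x : Mob f -> x \in S -> f x \in S.
Proof. by case=> _ hp; rewrite !memS_count hp. Qed.

Lemma Mob_comp f g : Mob f -> Mob g -> Mob (fun z => f (g z)).
Proof.
case=> /is_mobiusP [M [hM eM]] pf [/is_mobiusP [N [hN eN]] pg]; split.
  have h : det (mmul M N) != 0 by rewrite det_mmul mulf_neq0.
  case: (mob_is_mobius h) => a [b [c [d [h' e]]]].
  by exists a, b, c, d; split => // z; rewrite -e eM eN mob_comp.
by move=> x; rewrite pf pg.
Qed.

Lemma Mob_id : Mob id.
Proof.
split; last by move=> x.
exists (1 : C), (0 : C), (0 : C), (1 : C); split; first by rewrite mulr1 mulr0 subr0 oner_eq0.
by move=> z; exact: (esym (@mob_mid C z)).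
Qed.

Definition SS := seq_sub S.

Definition fS (f : P1 C -> P1 C) (x : SS) : SS := insubd x (f (val x)).

Definition rho (f : P1 C -> P1 C) : {perm SS} :=
  match injectiveP (fS f) with ReflectT inj => perm inj | ReflectF _ => 1%g end.

Lemma fSE f x : Mob f -> val (fS f x) = f (val x).
Proof. by move=> hf; rewrite /fS val_insubd Mob_S // (valP x). Qed.

Lemma rhoE f : Mob f -> forall x, val (rho f x) = f (val x).
Proof.
move=> hf x; rewrite /rho; case: injectiveP => [i|ni]; first by rewrite permE fSE.
exfalso; apply: ni => y z e; apply: val_inj; apply: (Mob_inj hf).
by rewrite -!fSE // e.
Qed.

Lemma rho_mul f g : Mob f -> Mob g -> rho (fun z => g (f z)) = (rho f * rho g)%g.
Proof.
move=> hf hg; apply/permP => x; apply: val_inj.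
by rewrite permM !rhoE //; apply: Mob_comp.
Qed.

Lemma rho_id : rho id = 1%g.
Proof. by apply/permP => x; apply: val_inj; rewrite perm1 rhoE //; exact: Mob_id. Qed.

Lemma three_pts : exists z1 z2 z3, [/\ z1 \in S, z2 \in S, z3 \in S & [/\ z1 != z2, z1 != z3 & z2 != z3]].
Proof.
have u : uniq S := undup_uniq D.
exists (nth None S 0), (nth None S 1), (nth None S 2).
by rewrite !mem_nth ?(nth_uniq _ _ _ u) //; apply: leq_trans hsupp.
Qed.

Lemma mob_eq3 (M N : mx C) : det M != 0 -> det N != 0 ->
  (forall x, x \in S -> mob M x = mob N x) -> forall z, mob M z = mob N z.
Proof.
move=> hM hN e z.
have [z1 [z2 [z3 [s1 s2 s3 [d12 d13 d23]]]]] := three_pts.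
have hA : det (mmul (adj N) M) != 0 by rewrite det_mmul det_adj mulf_neq0.
have fx : forall x, x \in S -> mob (mmul (adj N) M) x = x.
  by move=> x sx; rewrite -mob_comp // e // mobK.
have [h1 h2 h3] := fix3 hA d12 d13 d23 (fx _ s1) (fx _ s2) (fx _ s3).
have a0 : ma (mmul (adj N) M) != 0.
  by apply: contra hA => /eqP a0; rewrite /det h1 h3 -h2 a0 ?mulr0 ?mul0r ?subrr.
by rewrite -[LHS](@mobKV C N (mob M z) hN) (@mob_comp C (adj N) M z hM) (mob_scal z h3 h1 h2 a0).
Qed.

Lemma Mob_eq f g : Mob f -> Mob g -> (forall x, x \in S -> f x = g x) -> forall z, f z = g z.
Proof.
case=> /is_mobiusP [M [hM eM]] _ [/is_mobiusP [N [hN eN]] _] e z.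
rewrite eM eN; apply: mob_eq3 => // x sx; by rewrite -eM -eN e.
Qed.

Lemma rho_inj f g : Mob f -> Mob g -> rho f = rho g -> forall z, f z = g z.
Proof.
move=> hf hg e; apply: Mob_eq => // x sx.
by have := rhoE hf (SeqSub sx); rewrite e rhoE.
Qed.

Definition bP (P : Prop) : bool := if excluded_middle_informative P then true else false.
Lemma bPP P : reflect P (bP P).
Proof. by rewrite /bP; case: excluded_middle_informative => h; constructor. Qed.

Definition GS : {set {perm SS}} := [set p | bP (exists f, Mob f /\ rho f = p)].

Lemma GSP p : reflect (exists f, Mob f /\ rho f = p) (p \in GS).
Proof. by rewrite inE; exact: bPP. Qed.

Lemma GS_group : group_set GS.
Proof.
apply/group_setP; split; first by apply/GSP; exists id; split; [exact: Mob_id | exact: rho_id].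
move=> p q /GSP [f [hf <-]] /GSP [g [hg <-]]; apply/GSP.
by exists (fun z => g (f z)); split; [apply: Mob_comp | apply: rho_mul].
Qed.

Canonical GSg := Group GS_group.

Definition phi (p : {perm SS}) : P1 C -> P1 C :=
  epsilon (inhabits id) (fun f => Mob f /\ rho f = p).

Lemma phiP p : p \in GS -> Mob (phi p) /\ rho (phi p) = p.
Proof. by move/GSP => h; exact: (epsilon_spec _ _ h). Qed.

Lemma phi_ext f : Mob f -> forall z, phi (rho f) z = f z.
Proof.
move=> hf; have hG : rho f \in GS by apply/GSP; exists f.
have [h1 h2] := phiP hG; exact: rho_inj.
Qed.

Lemma phiM p q : p \in GS -> q \in GS -> forall z, phi (p * q)%g z = phi q (phi p z).
Proof.
move=> hp hq z; have [f1 e1] := phiP hp; have [g1 e2] := phiP hq.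
rewrite -{1}e1 -{1}e2 -rho_mul //; exact: phi_ext (Mob_comp g1 f1) z.
Qed.

Lemma phi1 z : phi 1%g z = z.
Proof. by rewrite -rho_id phi_ext //; exact: Mob_id. Qed.

Lemma phi_inj p : p \in GS -> injective (phi p).
Proof. by move=> hp; apply: Mob_inj; case: (phiP hp). Qed.

Lemma phi_rho p x : p \in GS -> val (p x) = phi p (val x).
Proof. by move=> hp; case: (phiP hp) => h1 h2; rewrite -{1}h2 rhoE. Qed.


Lemma iter_rho p (x : SS) m : p \in GS -> val (iter m p x) = iter m (phi p) (val x).
Proof. by move=> hp; elim: m => [|m IH] //=; rewrite phi_rho // IH. Qed.

Lemma fix_struct p : p \in GS -> p != 1%g ->
  exists s : seq (P1 C), [/\ uniq s, size s = 2%N & forall z, (phi p z == z) = (z \in s)].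
Proof.
move=> hp p1; have [hm hr] := phiP hp; have [/is_mobiusP [M [hM eM]] hd] := hm.
have nsc : ~ [/\ mc M = 0, ma M = md M & mb M = 0].
  case=> h1 h2 h3; apply/negP: p1; apply/negPn/eqP.
  have a0 : ma M != 0 by apply: contra hM => /eqP a0; rewrite /det h1 h3 -h2 a0 ?mulr0 ?mul0r ?subrr.
  rewrite -hr; apply/permP => x; apply: val_inj; rewrite perm1 (rhoE hm).
  by rewrite eM (mob_scal _ h3 h1 h2 a0).
have [D0|D0] := eqVneq ((ma M - md M) ^+ 2 + 4 * mb M * mc M) 0.
  exfalso; set m := #[p]%g.
  have m0 : (0 < m)%N := order_gt0 p.
  have fx : forall x, x \in S -> mob (mpow M m) x = x.
    move=> x sx; rewrite -mob_iter //.
    have := iter_rho (SeqSub sx) m hp; rewrite -permX expg_order perm1 /= => e.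
    have ei : forall k w, iter k (mob M) w = iter k (phi p) w.
      by elim => [|k IH] w //=; rewrite IH eM.
    by rewrite ei -e.
  have [z1 [z2 [z3 [s1 s2 s3 [d12 d13 d23]]]]] := three_pts.
  have hMm : det (mpow M m) != 0 by rewrite det_mpow expf_neq0.
  have := fix3 hMm d12 d13 d23 (fx _ s1) (fx _ s2) (fx _ s3).
  move: m0 hMm fx; clearbody m; case: m => [|m'] // _ _ _; exact: (parabolic hM D0 nsc).
have hD' : (ma M - md M) ^+ 2 - 4 * (- mc M) * mb M != 0.
  by apply: contra D0 => /eqP e; apply/eqP; rewrite -[RHS]e; ring.
have [s [us ss es]] := roots2 hD'.
exists s; split => // z; by rewrite eM fixE // QvE es.
Qed.

Definition fp (f : P1 C -> P1 C) : seq (P1 C) :=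
  epsilon (inhabits [::]) (fun s => [/\ uniq s, size s = 2%N & forall z, (f z == z) = (z \in s)]).

Lemma fpP p : p \in GS -> p != 1%g ->
  [/\ uniq (fp (phi p)), size (fp (phi p)) = 2%N & forall z, (phi p z == z) = (z \in fp (phi p))].
Proof. by move=> hp p1; have h := fix_struct hp p1; exact: (epsilon_spec _ _ h). Qed.

Definition Xs : seq (P1 C) := S ++ flatten [seq fp (phi p) | p <- [seq p <- enum GS | p != 1%g]].

Lemma Xs_S z : z \in S -> z \in Xs.
Proof. by rewrite mem_cat => ->. Qed.

Lemma Xs_fp p z : p \in GS -> p != 1%g -> z \in fp (phi p) -> z \in Xs.
Proof.
move=> hp p1 hz; rewrite mem_cat; apply/orP; right; apply/flatten_mapP.
by exists p => //; rewrite mem_filter p1 mem_enum.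
Qed.

Lemma Xs_inv q z : q \in GS -> z \in Xs -> phi q z \in Xs.
Proof.
move=> hq; rewrite mem_cat => /orP [hz|/flatten_mapP [p]].
  by apply: Xs_S; apply: Mob_S hz; case: (phiP hq).
rewrite mem_filter mem_enum => /andP [p1 hp] hz.
have [_ _ ep] := fpP hp p1.
have fz : phi p z = z by apply/eqP; rewrite ep.
set p' := (q^-1 * (p * q))%g.
have hp' : p' \in GS by rewrite !groupM ?groupV.
have p'1 : p' != 1%g by rewrite /p' -conjgE conjg_eq1.
apply: (Xs_fp hp' p'1).
have [_ _ ep'] := fpP hp' p'1; rewrite -ep'; apply/eqP.
rewrite /p' phiM ?groupV ?groupM // phiM //.
by rewrite -(phiM hq) ?groupV // mulgV phi1 fz.
Qed.

Definition X := seq_sub Xs.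

Definition to (x : X) (p : {perm SS}) : X := if p \in GS then insubd x (phi p (val x)) else x.

Lemma toE x p : p \in GS -> val (to x p) = phi p (val x).
Proof. by move=> hp; rewrite /to hp val_insubd Xs_inv // (valP x). Qed.

Lemma to_is_action : is_action GS to.
Proof.
split.
  move=> p x y; rewrite /to; case: ifP => hp // e; apply: val_inj; apply: (phi_inj hp).
  by rewrite -!toE // /to hp e.
by move=> x p q hp hq; apply: val_inj; rewrite !toE ?groupM // phiM.
Qed.

Definition toA := Action to_is_action.

Lemma card_sub (s : seq (P1 C)) : uniq s -> {subset s <= Xs} ->
  #|[set x : X | val x \in s]| = size s.
Proof.
move=> us ss; rewrite cardE -(size_map val); apply/perm_size/uniq_perm => //.
  by rewrite map_inj_uniq ?enum_uniq //; exact: val_inj.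
move=> z; apply/mapP/idP => [[x] |hz]; first by rewrite mem_enum inE => h ->.
have zX : z \in Xs by exact: ss.
by exists (SeqSub zX); rewrite ?mem_enum ?inE.
Qed.

Lemma fix2 a : a \in GSg -> a != 1%g -> #|('Fix_toA[a])%g| = 2%N.
Proof.
move=> ha a1; have [u sz e] := fpP ha a1.
rewrite -sz -card_sub //; last by move=> z hz; exact: Xs_fp ha a1 hz.
apply: eq_card => x; rewrite [in RHS]inE; apply/afix1P/idP => [h|h].
  by rewrite -e -(toE x ha); apply/eqP; congr val.
by apply: val_inj; rewrite /= toE // ; apply/eqP; rewrite e.
Qed.

Definition SX := [set x : X | val x \in S].

Lemma SX_card : #|SX| = size S.
Proof. by rewrite card_sub ?undup_uniq // => z; exact: Xs_S. Qed.

Lemma SX_inv x a : x \in SX -> a \in GSg -> toA x a \in SX.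
Proof.
move=> hx ha; move: hx; rewrite !inE => hx /=; rewrite toE //.
have [hm _] := phiP ha; exact: Mob_S hm hx.
Qed.

Lemma GS_le24 : (#|GSg| <= 24)%N.
Proof.
apply: (abstract fix2 (S := SX)); first exact: SX_inv.
by rewrite SX_card hsupp /= -hdeg size_undup.
Qed.

Lemma final n (T : 'I_n -> P1 C -> P1 C) : (forall k, Mob (T k)) ->
  (forall k l, (forall z, T k z = T l z) -> k = l) -> (n <= 24)%N.
Proof.
move=> hT hinj.
have inj : injective (fun k => rho (T k)) by move=> k l e; apply: hinj; apply: rho_inj.
have : (#|[set rho (T k) | k in 'I_n]| <= #|GSg|)%N.
  apply: subset_leq_card; apply/subsetP => p /imsetP [k hk ->]; apply/GSP; by exists (T k).
rewrite card_imset // card_ord => h; exact: leq_trans h GS_le24.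
Qed.

End Main.

Unset Implicit Arguments.

(* |T| <= 24: any family of pairwise distinct Moebius maps preserving D
   (indexed by 'I_n) has n <= 24; this also encodes finiteness of T. *)
Theorem lemma4p7 (R : realType) (D : seq (P1 R[i]))
  (hdeg : size D = 10%N) (hsupp : (3 <= size (undup D))%N)
  (n : nat) (T : 'I_n -> (P1 R[i] -> P1 R[i]))
  (hT : forall k, is_mobius (T k) /\ preserves_divisor D (T k))
  (hinj : forall k l, (forall z, T k z = T l z) -> k = l) :
  (n <= 24)%N.
Proof.
exact: (@final R[i] D hsupp hdeg n T hT hinj).
Qed.
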